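(* Let $k$ be a Brauer field and let $K/k$ be a field extension such that the group $K^{\times}/(k^{\times}\cdot(K^{\times})^d)$ is finite for all $d\ge 1$. Then $K$ is a Brauer field.
   Context: A field $k$ is a Brauer field if for every $d\ge 1$ there is a number $N_k(d)$ such that every equation $a_1x_1^d+\cdots+a_nx_n^d=0$ with $n>N_k(d)$ and $a_i\in k$ has a non-trivial solution in $k^n$. *)

(* Defs.v *)
From HB Require Import structures.
From mathcomp Require Import all_boot all_order all_algebra.
Set Implicit Arguments. Unset Strict Implicit. Unset Printing Implicit Defensive.
Import GRing.Theory.
Local Open Scope ring_scope.

Definition brauer_field (F : fieldType) : Prop :=
  forall d : nat, (0 < d)%N ->
    exists N : nat, forall (n : nat) (a : 'I_n -> F), (N < n)%N ->
      exists x : 'I_n -> F, (exists i, x i != 0) /\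
        \sum_(i < n) a i * x i ^+ d = 0.

Definition in_base_times_powers (k K : fieldType) (f : {rmorphism k -> K})
    (d : nat) (z : K) : Prop :=
  exists a : k, exists y : K, a != 0 /\ y != 0 /\ z = f a * y ^+ d.

(* The quotient group K^x / (k^x . (K^x)^d) is finite: there are finitely many
   nonzero elements r_1..r_m of K such that every nonzero x of K lies in one of
   the cosets r_j . k^x . (K^x)^d. *)
Definition finite_quotient_mod_powers (k K : fieldType) (f : {rmorphism k -> K})
    (d : nat) : Prop :=
  exists s : seq K, (forall r, r \in s -> r != 0) /\
    forall x : K, x != 0 -> exists2 r, r \in s &
      in_base_times_powers f d (x / r).

(* Main.v *)
Require Import Defs.
From HB Require Import structures.
From mathcomp Require Import all_boot all_order all_algebra.
From mathcomp Require Import ring.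
From Stdlib Require Import ClassicalEpsilon.
Import GRing.Theory.

Lemma pigeon n m N (g : 'I_n -> 'I_m) : (m * N < n)%N ->
  exists j, (N < #|[set i | g i == j]|)%N.
Proof.
move=> Hn.
case: (boolP [exists j, N < #|[set i | g i == j]|]) => [/existsP [j Hj] | H].
  by exists j.
have {}H j : ~~ (N < #|[set i | g i == j]|)%N.
  by apply/negP => Hj; move/negP: H; apply; apply/existsP; exists j.
have: (n <= m * N)%N.
  rewrite -{1}(card_ord n) -sum1_card (partition_big g predT) //=.
  apply: (@leq_trans (\sum_(j < m) N)).
    apply: leq_sum => j _.
    have -> : (\sum_(i < n | g i == j) 1 = #|[set i | g i == j]|)%N.
      by rewrite -sum1_card; apply: eq_bigl => i; rewrite inE.
    by rewrite leqNgt; apply: H.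
  by rewrite sum_nat_const card_ord.
by rewrite leqNgt Hn.
Qed.

Local Open Scope ring_scope.

Lemma fchoice {I T : Type} {P : I -> T -> Prop} :
  (forall i, exists t, P i t) -> exists g, forall i, P i (g i).
Proof.
move=> H; exists (fun i => proj1_sig (constructive_indefinite_description _ (H i))).
by move=> i; exact: proj2_sig _.
Qed.

Theorem proposition2p4 (k K : fieldType) (f : {rmorphism k -> K}) :
  brauer_field k ->
  (forall d : nat, (0 < d)%N -> finite_quotient_mod_powers f d) ->
  brauer_field K.
Proof.
move=> Hk Hq d d0.
have [N HN] := Hk d d0.
have [s [s0 Hs]] := Hq d d0.
exists (size s * N)%N => n a Hn.
case: (boolP [exists i, a i == 0]) => [/existsP [i /eqP ai0] | Ha].
  exists (fun j => if j == i then 1 else 0); split.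
    by exists i; rewrite eqxx oner_eq0.
  apply: big1 => j _; case: eqP => [->|_]; first by rewrite ai0 mul0r.
  by rewrite expr0n eqn0Ngt d0 /= mulr0.
move/existsPn: Ha => Ha.
have Hc i : exists t : 'I_(size s) * k * K, t.1.2 != 0 /\ t.2 != 0 /\
    a i = s`_t.1.1 * f t.1.2 * t.2 ^+ d.
  have [r rs [b [y [b0 [y0 E]]]]] := Hs (a i) (Ha i).
  have ri : (index r s < size s)%N by rewrite index_mem.
  exists (Ordinal ri, b, y); rewrite /= nth_index //; split => //; split => //.
  by rewrite -mulrA -E mulrC divfK //; apply: s0.
have [G HG] := fchoice Hc.
pose g := fun i => (G i).1.1.
have [j Hj] := @pigeon _ _ _ g Hn.
pose S := [set i | g i == j].
have [z [[t0 zt0] Hz]] := HN #|S| (fun t => (G (enum_val t)).1.2) Hj.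
have St0 := enum_valP t0.
pose h := enum_rank_in St0.
exists (fun i => if i \in S then f (z (h i)) / (G i).2 else 0); split.
  exists (enum_val t0); rewrite St0 /h enum_valK_in mulf_neq0 // ?fmorph_eq0 ?invr_eq0 //.
  by have [_ [y0 _]] := HG (enum_val t0).
rewrite (eq_bigr (fun i => if i \in S then s`_j * f ((G i).1.2 * z (h i) ^+ d) else 0)); last first.
  move=> i _; case: ifP => iS; last by rewrite expr0n eqn0Ngt d0 /= mulr0.
  have [_ [y0 ->]] := HG i.
  have gi : (G i).1.1 = j by move: iS; rewrite inE => /eqP.
  rewrite gi rmorphM rmorphXn expr_div_n.
  field.
  by rewrite expf_neq0.
rewrite -big_mkcond /= big_enum_val.
rewrite (eq_bigr (fun t => s`_j * f ((G (enum_val t)).1.2 * z t ^+ d))); last first.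
  by move=> t _; rewrite /h enum_valK_in.
by rewrite -mulr_sumr -rmorph_sum Hz rmorph0 mulr0.
Qed.
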